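(* If $s>0$ is small enough, there exist numbers $S_n,T_n$ and a point $z_0$ such that $R_n(1)=z_0$, $R_n(z_0)=1$ and $R_n'(1)R_n'(z_0)=1$ (so $\{1,z_0\}$ is a parabolic periodic orbit of period $2$ with multiplier $1$), and these can be chosen so that $\lim_{s\to0^+}S_n/s^\nu=\mu$, $\lim_{s\to0^+}T_n/s^\nu=(d_1d_n-1)\mu$ and $\lim_{s\to0^+}z_0/s^\nu=d_1d_n\mu$.
   Context: $n\ge3$ odd, $d_1,\dots,d_n$ positive integers with $\sum1/d_i<1$, $d_{\max}=\max_id_i$, $D_i=d_i+d_{i+1}$, $c_1=(d_{\max}^2s)^{1/d_1}$, $c_i=s^{1/d_i}c_{i-1}$ ($2\le i\le n-1$), $R_n(z)=\frac{S_n}{z^{d_n}}\prod_{i=1}^{n-1}(z^{D_i}-c_i^{D_i})^{(-1)^i}+T_n$, $\nu=\frac{d_n}{d_n-1}\sum_{i=1}^{n-1}\frac1{d_i}$, and $\mu=(d_1d_n)^{-d_n/(d_n-1)}d_{\max}^{2(d_n-d_1)/(d_1(d_n-1))}$. *)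

(* Defs.v *)
From Stdlib Require Import Reals Lra Lia.
Open Scope R_scope.

(* Indices run over 1..n; d : nat -> nat with d i = d_i for 1 <= i <= n. *)

Fixpoint dmax (d : nat -> nat) (n : nat) : nat :=
  match n with
  | O => O
  | S k => Nat.max (d (S k)) (dmax d k)
  end.

Fixpoint sumR (f : nat -> R) (m : nat) : R :=
  match m with O => 0 | S k => sumR f k + f (S k) end.
Fixpoint prodR (f : nat -> R) (m : nat) : R :=
  match m with O => 1 | S k => prodR f k * f (S k) end.

Definition Dd (d : nat -> nat) (i : nat) : nat := (d i + d (S i))%nat.

Fixpoint cc (d : nat -> nat) (n : nat) (s : R) (i : nat) : R :=
  match i with
  | O => 1
  | S k =>
      match k with
      | O => Rpower (INR (dmax d n) ^ 2 * s) (/ INR (d 1%nat))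
      | S _ => Rpower s (/ INR (d i)) * cc d n s k
      end
  end.

Definition Rfactor (d : nat -> nat) (n : nat) (s z : R) (i : nat) : R :=
  let q := z ^ (Dd d i) - (cc d n s i) ^ (Dd d i) in
  if Nat.odd i then / q else q.

Definition Rn (d : nat -> nat) (n : nat) (s Sn Tn z : R) : R :=
  Sn / z ^ (d n) * prodR (Rfactor d n s z) (n - 1) + Tn.

Definition nu (d : nat -> nat) (n : nat) : R :=
  INR (d n) / (INR (d n) - 1) * sumR (fun i => / INR (d i)) (n - 1).

Definition mu (d : nat -> nat) (n : nat) : R :=
  Rpower (INR (d 1%nat) * INR (d n)) (- (INR (d n) / (INR (d n) - 1))) *
  Rpower (INR (dmax d n))
    (2 * (INR (d n) - INR (d 1%nat)) / (INR (d 1%nat) * (INR (d n) - 1))).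

(* Main.v *)
Require Import Defs.
From Stdlib Require Import Reals.
From Stdlib Require Import Lra Lia ClassicalEpsilon.
Open Scope R_scope.

Lemma sumR_ext (f g : nat -> R) m :
  (forall i, (1 <= i <= m)%nat -> f i = g i) -> sumR f m = sumR g m.
Proof. induction m; intros H; simpl; auto.
  rewrite IHm by (intros; apply H; lia). rewrite H by lia. reflexivity. Qed.

Lemma prodR_ext (f g : nat -> R) m :
  (forall i, (1 <= i <= m)%nat -> f i = g i) -> prodR f m = prodR g m.
Proof. induction m; intros H; simpl; auto.
  rewrite IHm by (intros; apply H; lia). rewrite H by lia. reflexivity. Qed.

Lemma prodR_mult (f g : nat -> R) m :
  prodR (fun i => f i * g i) m = prodR f m * prodR g m.
Proof. induction m; simpl; [ring|]. rewrite IHm. ring. Qed.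

Lemma sumR_plus (f g : nat -> R) m :
  sumR (fun i => f i + g i) m = sumR f m + sumR g m.
Proof. induction m; simpl; [ring|]. rewrite IHm. ring. Qed.

Lemma sumR_scal (a : R) (f : nat -> R) m :
  sumR (fun i => a * f i) m = a * sumR f m.
Proof. induction m; simpl; [ring|]. rewrite IHm. ring. Qed.

Lemma prodR_Rpower (X : R) (f : nat -> R) m : 0 < X ->
  prodR (fun i => Rpower X (f i)) m = Rpower X (sumR f m).
Proof. intros HX. induction m; simpl. rewrite Rpower_O; auto.
  rewrite IHm, Rpower_plus. reflexivity. Qed.

Lemma prodR_le (f g : nat -> R) m :
  (forall i, (1 <= i <= m)%nat -> 0 <= f i <= g i) -> 0 <= prodR f m <= prodR g m.
Proof. induction m; intros H; simpl. lra.
  destruct IHm as [A B]. intros; apply H; lia.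
  assert (C := H (S m) ltac:(lia)).
  split. apply Rmult_le_pos; lra. apply Rmult_le_compat; lra. Qed.

Lemma sumR_nonneg_le (f : nat -> R) m i :
  (forall j, (1 <= j <= m)%nat -> 0 <= f j) -> (1 <= i <= m)%nat -> f i <= sumR f m.
Proof. induction m; intros H Hi. lia. simpl.
  assert (Hs : 0 <= sumR f m).
  { clear IHm Hi. induction m. simpl; lra. simpl.
    assert (0 <= f (S m)) by (apply H; lia). 
    assert (0 <= sumR f m) by (apply IHm; intros; apply H; lia). lra. }
  destruct (Nat.eq_dec i (S m)) as [->|Hne]. lra.
  assert (f i <= sumR f m) by (apply IHm; [intros; apply H; lia| lia]).
  assert (0 <= f (S m)) by (apply H; lia). lra. Qed.

Lemma lim_ext (f g : R -> R) D l x0 :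
  (forall x, D x -> f x = g x) -> limit1_in f D l x0 -> limit1_in g D l x0.
Proof. intros E H eps Heps. destruct (H eps Heps) as [a [Ha Hb]].
  exists a; split; auto. intros x [Dx Hx]. rewrite <- E by auto. apply Hb; auto. Qed.

Lemma lim_sub (f : R -> R) (D1 D2 : R -> Prop) l x0 :
  (forall x, D2 x -> D1 x) -> limit1_in f D1 l x0 -> limit1_in f D2 l x0.
Proof. intros E H eps Heps. destruct (H eps Heps) as [a [Ha Hb]].
  exists a; split; auto. intros x [Dx Hx]. apply Hb; auto. Qed.

Lemma lim_const (c : R) D x0 : limit1_in (fun _ => c) D c x0.
Proof. intros eps Heps. exists 1; split; [lra|]. intros x _. simpl. unfold R_dist.
  replace (c - c) with 0 by ring. rewrite Rabs_R0; lra. Qed.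

Lemma lim_id D x0 : limit1_in (fun x => x) D x0 x0.
Proof. intros eps Heps. exists eps; split; [lra|]. intros x [_ H]. exact H. Qed.

Lemma lim_pow (f : R -> R) D l x0 k :
  limit1_in f D l x0 -> limit1_in (fun x => f x ^ k) D (l ^ k) x0.
Proof. intros H. induction k; simpl. apply lim_const. apply limit_mul; auto. Qed.

Lemma lim_sumR (f : nat -> R -> R) (l : nat -> R) D x0 m :
  (forall i, (1 <= i <= m)%nat -> limit1_in (f i) D (l i) x0) ->
  limit1_in (fun x => sumR (fun i => f i x) m) D (sumR l m) x0.
Proof. induction m; intros H; simpl. apply lim_const.
  apply limit_plus. apply IHm; intros; apply H; lia. apply H; lia. Qed.

Lemma lim_prodR (f : nat -> R -> R) (l : nat -> R) D x0 m :
  (forall i, (1 <= i <= m)%nat -> limit1_in (f i) D (l i) x0) ->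
  limit1_in (fun x => prodR (fun i => f i x) m) D (prodR l m) x0.
Proof. induction m; intros H; simpl. apply lim_const.
  apply limit_mul. apply IHm; intros; apply H; lia. apply H; lia. Qed.

Lemma lim_evt_lt (f : R -> R) D l x0 c :
  limit1_in f D l x0 -> l < c ->
  exists del, 0 < del /\ forall x, D x -> Rabs (x - x0) < del -> f x < c.
Proof. intros H Hl. destruct (H (c - l)) as [a [Ha Hb]]. lra.
  exists a; split; auto. intros x Dx Hx. assert (Hd := Hb x (conj Dx Hx)).
  simpl in Hd. unfold R_dist in Hd. apply Rabs_def2 in Hd. lra. Qed.

Lemma lim_evt_gt (f : R -> R) D l x0 c :
  limit1_in f D l x0 -> c < l ->
  exists del, 0 < del /\ forall x, D x -> Rabs (x - x0) < del -> c < f x.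
Proof. intros H Hl. destruct (H (l - c)) as [a [Ha Hb]]. lra.
  exists a; split; auto. intros x Dx Hx. assert (Hd := Hb x (conj Dx Hx)).
  simpl in Hd. unfold R_dist in Hd. apply Rabs_def2 in Hd. lra. Qed.

Lemma lim_Rpower0 (D : R -> Prop) a : 0 < a -> (forall x, D x -> 0 < x) ->
  limit1_in (fun s => Rpower s a) D 0 0.
Proof. intros Ha HD eps Heps. exists (Rpower eps (/ a)). split.
  unfold Rpower; apply exp_pos.
  intros x [Dx Hx]. simpl in *. unfold R_dist in *. assert (Hx0 := HD x Dx).
  rewrite Rminus_0_r in *. rewrite Rabs_pos_eq in Hx by lra.
  rewrite Rabs_pos_eq by (unfold Rpower; left; apply exp_pos).
  replace eps with (Rpower (Rpower eps (/a)) a).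
  apply Rlt_Rpower_l; lra.
  rewrite Rpower_mult. rewrite Rinv_l by lra. apply Rpower_1; lra. Qed.

Lemma dpl_ext (f g : R -> R) x l : (forall z, f z = g z) ->
  derivable_pt_lim f x l -> derivable_pt_lim g x l.
Proof. intros E H eps He. destruct (H eps He) as [del Hd]. exists del. intros h h0 hh.
  rewrite <- !E. apply Hd; auto. Qed.

Lemma dpl_val (f : R -> R) x l l' : derivable_pt_lim f x l -> l = l' -> derivable_pt_lim f x l'.
Proof. intros H ->; exact H. Qed.

Lemma dpl_mul (f g : R -> R) x a b : derivable_pt_lim f x a -> derivable_pt_lim g x b ->
  derivable_pt_lim (fun z => f z * g z) x (a * g x + f x * b).
Proof. intros. apply (derivable_pt_lim_mult f g); auto. Qed.

Lemma dpl_plus (f g : R -> R) x a b : derivable_pt_lim f x a -> derivable_pt_lim g x b ->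
  derivable_pt_lim (fun z => f z + g z) x (a + b).
Proof. intros. apply (derivable_pt_lim_plus f g); auto. Qed.

Lemma dpl_const c x : derivable_pt_lim (fun _ => c) x 0.
Proof. apply (derivable_pt_lim_const c). Qed.

Lemma dpl_inv (f : R -> R) x a : derivable_pt_lim f x a -> f x <> 0 ->
  derivable_pt_lim (fun z => / f z) x (- a / (f x)^2).
Proof. intros H Hf. assert (H2 := derivable_pt_lim_div (fun _ => 1) f x 0 a (dpl_const 1 x) H Hf).
  eapply dpl_ext. 2: apply dpl_val with (1 := H2). intros z; unfold div_fct; simpl. unfold Rdiv; ring.
  unfold Rsqr. simpl. field. auto. Qed.

Lemma dpl_powc (D : nat) c x :
  derivable_pt_lim (fun z => z ^ D - c) x (INR D * x ^ pred D).
Proof. eapply dpl_val. apply (derivable_pt_lim_minus (fun z => z ^ D) (fun _ => c)).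
  apply derivable_pt_lim_pow. apply dpl_const. ring. Qed.

Lemma dpl_powf (f : R -> R) (D : nat) x a : derivable_pt_lim f x a ->
  derivable_pt_lim (fun z => f z ^ D) x (INR D * a * f x ^ pred D).
Proof. intros H. induction D. simpl. eapply dpl_val. apply dpl_const. ring.
  eapply dpl_ext. intros z. symmetry. apply (eq_refl (f z * f z ^ D)).
  eapply dpl_val. apply dpl_mul; eauto. rewrite S_INR. destruct D. simpl. ring.
  simpl. ring. Qed.

Section Main.
Variable d : nat -> nat.
Variables n k : nat.
Hypothesis hnk : n = S (2*k).
Hypothesis hk : (1 <= k)%nat.
Hypothesis hd2 : forall i, (1 <= i <= n)%nat -> (2 <= d i)%nat.

Definition dr i := INR (d i).
Definition sig i := sumR (fun j => / dr j) i.
Definition mm := (n - 1)%nat.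
Definition MM := INR (dmax d n) ^ 2.
Definition Mp := Rpower MM (/ dr 1).
Definition sg (i : nat) : R := if Nat.odd i then -1 else 1.
Definition Dr i := INR (Dd d i).
Definition KK := Rpower MM ((dr n - dr 1) / dr 1).
Definition ws := dr 1 * dr n * mu d n.
Definition pp := (d n - 1)%nat.

Lemma hm : mm = (2*k)%nat. Proof. unfold mm; lia. Qed.

Lemma dr_ge2 i : (1 <= i <= n)%nat -> 2 <= dr i.
Proof. intros H. unfold dr. apply (le_INR 2). apply hd2; auto. Qed.

Lemma dmax_ge i : (1 <= i <= n)%nat -> (d i <= dmax d n)%nat.
Proof. assert (G : forall N, (1 <= i <= N)%nat -> (d i <= dmax d N)%nat).
  { intros N H. induction N. lia. simpl.
    destruct (Nat.eq_dec i (S N)) as [->|]. lia. specialize (IHN ltac:(lia)). lia. }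
  apply G. Qed.

Lemma MM_pos : 0 < MM.
Proof. unfold MM. apply pow_lt. assert (H := dmax_ge n ltac:(lia)).
  assert (H2 := hd2 n ltac:(lia)). apply lt_0_INR. lia. Qed.

Lemma sig_S i : sig (S i) = sig i + / dr (S i). Proof. reflexivity. Qed.

Lemma sig_pos i : (1 <= i <= n)%nat -> 0 < sig i.
Proof. induction i; intros H. lia. rewrite sig_S.
  assert (0 < / dr (S i)) by (apply Rinv_0_lt_compat; assert (A := dr_ge2 (S i) H); lra).
  destruct (Nat.eq_dec i 0) as [->|]. unfold sig; simpl; lra.
  specialize (IHi ltac:(lia)). lra. Qed.

Lemma sig_mono i j : (i <= j <= n)%nat -> sig i <= sig j.
Proof. intros H. induction j. replace i with 0%nat by lia. lra.
  destruct (Nat.eq_dec i (S j)) as [->|]. lra. rewrite sig_S.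
  specialize (IHj ltac:(lia)).
  assert (0 < / dr (S j)) by (apply Rinv_0_lt_compat; assert (A := dr_ge2 (S j) ltac:(lia)); lra).
  lra. Qed.

Lemma drn_gt1 : 1 < dr n. Proof. assert (H := dr_ge2 n ltac:(lia)). lra. Qed.

Lemma nu_eq : nu d n = dr n / (dr n - 1) * sig mm.
Proof. reflexivity. Qed.

Lemma nu_gt i : (i <= mm)%nat -> sig i < nu d n.
Proof. intros Hi. rewrite nu_eq. assert (H1 := sig_mono i mm ltac:(unfold mm in *; lia)).
  assert (H2 := sig_pos mm ltac:(unfold mm; lia)). assert (H3 := drn_gt1).
  assert (E : dr n / (dr n - 1) = 1 + / (dr n - 1)) by (field; lra).
  assert (0 < / (dr n - 1)) by (apply Rinv_0_lt_compat; lra).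
  rewrite E. assert (0 < / (dr n - 1) * sig mm) by (apply Rmult_lt_0_compat; lra).
  nra. Qed.

Lemma nu_pos : 0 < nu d n.
Proof. assert (H := nu_gt 1 ltac:(unfold mm; lia)). assert (H2 := sig_pos 1 ltac:(lia)). lra. Qed.

Lemma cc_eq s i : 0 < s -> (1 <= i <= n)%nat -> cc d n s i = Mp * Rpower s (sig i).
Proof. intros Hs. induction i; intros Hi. lia.
  destruct i as [|i].
  - simpl. unfold Mp, MM, sig, dr. simpl. rewrite Rplus_0_l.
    rewrite <- Rpower_mult_distr; auto. apply MM_pos.
  - change (cc d n s (S (S i))) with (Rpower s (/ INR (d (S (S i)))) * cc d n s (S i)).
    rewrite IHi by lia. rewrite (sig_S (S i)). rewrite Rpower_plus. unfold dr. ring. Qed.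

Lemma Mp_pos : 0 < Mp. Proof. unfold Mp, Rpower. apply exp_pos. Qed.

Lemma cc_pos s i : 0 < s -> (1 <= i <= n)%nat -> 0 < cc d n s i.
Proof. intros. rewrite cc_eq by auto. apply Rmult_lt_0_compat. apply Mp_pos. unfold Rpower; apply exp_pos. Qed.

Lemma Dr_eq i : Dr i = dr i + dr (S i).
Proof. unfold Dr, Dd, dr. apply plus_INR. Qed.

Lemma sumR_S (f : nat -> R) j : sumR f (S j) = sumR f j + f (S j). Proof. reflexivity. Qed.
Lemma prodR_S (f : nat -> R) j : prodR f (S j) = prodR f j * f (S j). Proof. reflexivity. Qed.

Lemma odd_2k j : Nat.odd (2*j) = false.
Proof. induction j. reflexivity. replace (2 * S j)%nat with (S (S (2*j))) by lia. exact IHj. Qed.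
Lemma odd_S2k j : Nat.odd (S (2*j)) = true.
Proof. induction j. reflexivity. replace (S (2 * S j))%nat with (S (S (S (2*j)))) by lia. exact IHj. Qed.
Lemma odd_SS2k j : Nat.odd (S (S (2*j))) = false.
Proof. exact (odd_2k j). Qed.

Lemma tele1 j : (j <= k)%nat -> sumR (fun i => sg i * Dr i) (2*j) = dr (S (2*j)) - dr 1.
Proof. induction j; intros Hj. simpl. ring.
  replace (2 * S j)%nat with (S (S (2*j))) by lia. rewrite !sumR_S. rewrite IHj by lia.
  unfold sg. rewrite odd_S2k, odd_SS2k. rewrite !Dr_eq. ring. Qed.

Lemma tele2 j : (j <= k)%nat ->
  sumR (fun i => sg i * Dr i * sig i) (2*j) = dr (S (2*j)) * sig (2*j).
Proof. induction j; intros Hj. simpl. unfold sig; simpl; ring.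
  replace (2 * S j)%nat with (S (S (2*j))) by lia. rewrite !sumR_S. rewrite IHj by lia.
  unfold sg. rewrite odd_S2k, odd_SS2k. rewrite !Dr_eq. rewrite !sig_S.
  assert (A := dr_ge2 (S (2*j)) ltac:(lia)). assert (B := dr_ge2 (S (S (2*j))) ltac:(lia)).
  field. lra. Qed.

Definition ee s := Rpower s (nu d n).
Definition yy s w i := ((ee s * w) / cc d n s i) ^ (Dd d i).
Definition bb s w i := if Nat.odd i then / (1 - yy s w i) else (1 - yy s w i).
Definition Pi s w := prodR (bb s w) mm.
Definition aa s i := if Nat.odd i then / (- (cc d n s i ^ Dd d i)) else - (cc d n s i ^ Dd d i).
Definition aa' s i := if Nat.odd i then / (cc d n s i ^ Dd d i) else cc d n s i ^ Dd d i.

Lemma Rfactor_split s w i : 0 < s -> (1 <= i <= n)%nat ->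
  Rfactor d n s (ee s * w) i = aa s i * bb s w i.
Proof. intros Hs Hi. assert (Hc := cc_pos s i Hs Hi).
  set (c := cc d n s i) in *. set (x := ee s * w).
  assert (E : x ^ Dd d i - c ^ Dd d i = - (c ^ Dd d i) * (1 - yy s w i)).
  { unfold yy. fold x. fold c. replace (x ^ Dd d i) with (((x / c) * c) ^ Dd d i).
    rewrite Rpow_mult_distr. ring. f_equal. field. lra. }
  unfold Rfactor, aa, bb. fold c x. rewrite E. destruct (Nat.odd i). apply Rinv_mult. reflexivity. Qed.

Lemma prodR_aa s j : (j <= k)%nat -> prodR (aa s) (2*j) = prodR (aa' s) (2*j).
Proof. induction j; intros Hj. reflexivity.
  replace (2 * S j)%nat with (S (S (2*j))) by lia. rewrite !prodR_S, IHj by lia.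
  unfold aa, aa'. rewrite odd_S2k, odd_SS2k. rewrite Rinv_opp. ring. Qed.

Lemma aa'_eq s i : 0 < s -> (1 <= i <= n)%nat ->
  aa' s i = Rpower Mp (sg i * Dr i) * Rpower s (sg i * Dr i * sig i).
Proof. intros Hs Hi. assert (Hc := cc_pos s i Hs Hi).
  assert (E : cc d n s i ^ Dd d i = Rpower Mp (Dr i) * Rpower s (Dr i * sig i)).
  { rewrite <- Rpower_pow by auto. rewrite cc_eq by auto.
    rewrite <- Rpower_mult_distr. rewrite Rpower_mult. unfold Dr, sig. f_equal. f_equal. ring.
    apply Mp_pos. unfold Rpower; apply exp_pos. }
  unfold aa', sg. rewrite E. destruct (Nat.odd i).
  rewrite Rinv_mult, <- !Rpower_Ropp. f_equal; f_equal; ring.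
  f_equal; f_equal; ring. Qed.

Lemma drn_ne1 : dr n - 1 <> 0.
Proof. assert (H := drn_gt1). lra. Qed.

Lemma INR_pp : INR pp = dr n - 1.
Proof. unfold pp. rewrite minus_INR. reflexivity. assert (H := hd2 n ltac:(lia)). lia. Qed.

Lemma ee_pos s : 0 < ee s. Proof. unfold ee, Rpower. apply exp_pos. Qed.

Lemma ee_pp s : 0 < s -> ee s ^ pp = Rpower s (dr n * sig mm).
Proof. intros Hs. rewrite <- Rpower_pow by apply ee_pos. unfold ee. rewrite Rpower_mult.
  rewrite INR_pp. rewrite nu_eq. f_equal. unfold dr, sig, mm. assert (H := drn_ne1). unfold dr in H.
  field. auto. Qed.

Lemma P_decomp s w : 0 < s ->
  prodR (Rfactor d n s (ee s * w)) mm = KK * ee s ^ pp * Pi s w.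
Proof. intros Hs.
  rewrite (prodR_ext _ (fun i => aa s i * bb s w i)).
  2:{ intros i Hi. apply Rfactor_split; auto. unfold mm in Hi. lia. }
  rewrite prodR_mult. unfold Pi. f_equal.
  assert (Hmm : mm = (2*k)%nat) by (unfold mm; lia).
  rewrite Hmm, prodR_aa by lia.
  rewrite (prodR_ext _ (fun i => Rpower Mp (sg i * Dr i) * Rpower s (sg i * Dr i * sig i))).
  2:{ intros i Hi. apply aa'_eq; auto. lia. }
  rewrite prodR_mult, !prodR_Rpower; [| auto | apply Mp_pos].
  unfold Dr, sig. rewrite tele1, tele2 by auto. rewrite <- hnk. rewrite ee_pp by auto.
  rewrite Hmm. f_equal. unfold Mp, KK. rewrite Rpower_mult. f_equal. unfold Rdiv. ring. Qed.


Definition rr s z i := sg i * Dr i * z ^ pred (Dd d i) / (z ^ Dd d i - cc d n s i ^ Dd d i).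

Lemma dRfactor s z i : z ^ Dd d i - cc d n s i ^ Dd d i <> 0 ->
  derivable_pt_lim (fun z => Rfactor d n s z i) z (Rfactor d n s z i * rr s z i).
Proof. intros Hq. set (c := cc d n s i ^ Dd d i) in *.
  assert (E : forall z, Rfactor d n s z i = if Nat.odd i then / (z ^ Dd d i - c) else z ^ Dd d i - c)
    by reflexivity.
  eapply dpl_ext. intros; symmetry; apply E. rewrite E. unfold rr, sg. fold c.
  destruct (Nat.odd i).
  - eapply dpl_val. apply dpl_inv. apply dpl_powc. auto. unfold Dr. field. auto.
  - eapply dpl_val. apply dpl_powc. unfold Dr. field. auto. Qed.

Lemma dprod s z m' : (forall i, (1 <= i <= m')%nat -> z ^ Dd d i - cc d n s i ^ Dd d i <> 0) ->
  derivable_pt_lim (fun z => prodR (Rfactor d n s z) m') z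
    (prodR (Rfactor d n s z) m' * sumR (rr s z) m').
Proof. induction m'; intros H. simpl. eapply dpl_val. apply dpl_const. ring.
  eapply dpl_ext. intros; symmetry; apply prodR_S.
  eapply dpl_val. apply dpl_mul. apply IHm'. intros; apply H; lia. apply dRfactor. apply H; lia.
  rewrite prodR_S, sumR_S. ring. Qed.

Lemma dRn s Sv T z : z <> 0 ->
  (forall i, (1 <= i <= mm)%nat -> z ^ Dd d i - cc d n s i ^ Dd d i <> 0) ->
  derivable_pt_lim (fun z => Rn d n s Sv T z) z
    (Sv * (prodR (Rfactor d n s z) mm / z ^ d n) * (sumR (rr s z) mm - dr n / z)).
Proof. intros Hz H. unfold Rn.
  assert (Hp : z ^ d n <> 0) by (apply pow_nonzero; auto).
  eapply dpl_ext. intros y. symmetry. apply (eq_refl (Sv * / y ^ d n * prodR (Rfactor d n s y) (n - 1) + T)).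
  eapply dpl_val. apply dpl_plus. 2: apply dpl_const. apply dpl_mul.
  apply (derivable_pt_lim_scal (fun y => / y ^ d n)).
  apply dpl_inv. apply derivable_pt_lim_pow. auto. apply dprod. exact H.
  fold mm. assert (Hdn : (d n = S (pred (d n)))%nat) by (assert (A := hd2 n ltac:(lia)); lia).
  unfold dr. rewrite Hdn. rewrite S_INR. simpl pred. simpl pow. field. idtac.
  split; auto. apply pow_nonzero; auto. Qed.

Lemma Dd_pos i : (1 <= i <= mm)%nat -> (Dd d i = S (pred (Dd d i)))%nat.
Proof. intros Hi. unfold Dd. assert (A := hd2 i ltac:(unfold mm in Hi; lia)). lia. Qed.

Lemma yy_eq s w i : 0 < s -> (1 <= i <= n)%nat ->
  yy s w i * cc d n s i ^ Dd d i = (ee s * w) ^ Dd d i.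
Proof. intros Hs Hi. assert (Hc := cc_pos s i Hs Hi). unfold yy.
  rewrite <- Rpow_mult_distr. f_equal. field. lra. Qed.

Definition XS s w := sumR (fun i => sg i * Dr i * yy s w i / (yy s w i - 1)) mm.

Lemma rr_x s w i : 0 < s -> (1 <= i <= mm)%nat -> yy s w i <> 1 ->
  (ee s * w) * rr s (ee s * w) i = sg i * Dr i * yy s w i / (yy s w i - 1).
Proof. intros Hs Hi Hy. assert (Hin : (1 <= i <= n)%nat) by (unfold mm in Hi; lia).
  assert (Hc := cc_pos s i Hs Hin). assert (E := yy_eq s w i Hs Hin).
  assert (HC : cc d n s i ^ Dd d i <> 0) by (apply pow_nonzero; lra).
  unfold rr. set (x := ee s * w) in *. set (C := cc d n s i ^ Dd d i) in *.
  set (y := yy s w i) in *. rewrite (Dd_pos i Hi) in E. simpl in E.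
  assert (Hq : y * C - C <> 0).
  { intro H. apply Hy. apply (Rmult_eq_reg_r C). lra. auto. }
  rewrite (Dd_pos i Hi). simpl pred. simpl pow. rewrite <- E.
  replace (x * (sg i * Dr i * x ^ pred (Dd d i) / (y * C - C))) with
    (sg i * Dr i * (x * x ^ pred (Dd d i)) / (y * C - C)) by (field; auto).
  rewrite <- E. field. split; auto. intro H. apply Hy. lra. Qed.

Lemma sum_rr s w : 0 < s -> 0 < w -> (forall i, (1 <= i <= mm)%nat -> yy s w i <> 1) ->
  sumR (rr s (ee s * w)) mm = XS s w / (ee s * w).
Proof. intros Hs Hw Hy. assert (A := ee_pos s). assert (Hx : ee s * w <> 0) by nra.
  rewrite (sumR_ext _ (fun i => / (ee s * w) * ((ee s * w) * rr s (ee s * w) i))).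
  2:{ intros i Hi. field. split; lra. }
  rewrite sumR_scal. unfold XS. rewrite (sumR_ext _ _ mm (fun i Hi => rr_x s w i Hs Hi (Hy i Hi))).
  unfold Rdiv. ring. Qed.

Definition G1 s := prodR (Rfactor d n s 1) mm.
Definition L1 s := sumR (rr s 1) mm - dr n.
Definition Sf s w := (ee s * w - 1) / (G1 s - prodR (Rfactor d n s (ee s * w)) mm / (ee s * w) ^ d n).
Definition Tf s w := ee s * w - Sf s w * G1 s.
Definition Psi s w := (ee s * w - 1) ^ 2 * G1 s * L1 s * (XS s w - dr n) * w ^ pp * KK * Pi s w
   - (G1 s * (ee s * w) * w ^ pp - KK * Pi s w) ^ 2.

Definition Good s w :=
  Rn d n s (Sf s w) (Tf s w) 1 = ee s * w /\
  Rn d n s (Sf s w) (Tf s w) (ee s * w) = 1 /\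
  exists l1 l2 : R,
    derivable_pt_lim (fun z => Rn d n s (Sf s w) (Tf s w) z) 1 l1 /\
    derivable_pt_lim (fun z => Rn d n s (Sf s w) (Tf s w) z) (ee s * w) l2 /\
    l1 * l2 = 1.

Lemma dn_S : d n = S pp.
Proof. unfold pp. assert (A := hd2 n ltac:(lia)). lia. Qed.

Lemma Gx_eq s w : 0 < s -> 0 < w ->
  prodR (Rfactor d n s (ee s * w)) mm / (ee s * w) ^ d n = KK * Pi s w / (ee s * w * w ^ pp).
Proof. intros Hs Hw. rewrite P_decomp by auto. assert (A := ee_pos s).
  rewrite dn_S. simpl pow. rewrite Rpow_mult_distr. field.
  repeat split; try apply pow_nonzero; lra. Qed.

Lemma good_of s w : 0 < s -> 0 < w ->
  (forall i, (1 <= i <= mm)%nat -> yy s w i < 1) ->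
  (forall i, (1 <= i <= mm)%nat -> 1 - cc d n s i ^ Dd d i <> 0) ->
  G1 s * (ee s * w) * w ^ pp <> KK * Pi s w ->
  Psi s w = 0 -> Good s w.
Proof. intros Hs Hw Hy Hc HV HP. assert (He := ee_pos s).
  assert (Hx : ee s * w <> 0) by nra.
  assert (Hwp : w ^ pp <> 0) by (apply pow_nonzero; lra).
  assert (HGx := Gx_eq s w Hs Hw).
  assert (HG : G1 s - prodR (Rfactor d n s (ee s * w)) mm / (ee s * w) ^ d n <> 0).
  { rewrite HGx. replace (G1 s - KK * Pi s w / (ee s * w * w ^ pp)) with
      ((G1 s * (ee s * w) * w ^ pp - KK * Pi s w) / (ee s * w * w ^ pp)) by (field; repeat split; try lra; auto).
    unfold Rdiv. apply Rmult_integral_contrapositive_currified. intro; apply HV; lra.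
    apply Rinv_neq_0_compat; apply Rmult_integral_contrapositive_currified; auto. }
  assert (Hq1 : forall i, (1 <= i <= mm)%nat -> 1 ^ Dd d i - cc d n s i ^ Dd d i <> 0).
  { intros i Hi. rewrite pow1. auto. }
  assert (Hqx : forall i, (1 <= i <= mm)%nat -> (ee s * w) ^ Dd d i - cc d n s i ^ Dd d i <> 0).
  { intros i Hi. assert (Hin : (1 <= i <= n)%nat) by (unfold mm in Hi; lia).
    rewrite <- (yy_eq s w i Hs Hin). assert (Hc0 := cc_pos s i Hs Hin).
    assert (0 < cc d n s i ^ Dd d i) by (apply pow_lt; lra). specialize (Hy i Hi). nra. }
  split; [|split].
  - unfold Rn, Tf, G1. fold mm. rewrite pow1. unfold Rdiv. rewrite Rinv_1. ring.
  - unfold Rn, Tf. fold mm.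
    set (Gx := prodR (Rfactor d n s (ee s * w)) mm / (ee s * w) ^ d n) in *.
    assert (E1 : Sf s w / (ee s * w) ^ d n * prodR (Rfactor d n s (ee s * w)) mm = Sf s w * Gx)
      by (unfold Gx, Rdiv; ring).
    rewrite E1. assert (E2 : Sf s w * (G1 s - Gx) = ee s * w - 1) by (unfold Sf; fold Gx; field; auto).
    lra.
  - exists (Sf s w * (prodR (Rfactor d n s 1) mm / 1 ^ d n) * (sumR (rr s 1) mm - dr n / 1)).
    exists (Sf s w * (prodR (Rfactor d n s (ee s * w)) mm / (ee s * w) ^ d n) *
              (sumR (rr s (ee s * w)) mm - dr n / (ee s * w))).
    split. apply dRn. lra. auto. split. apply dRn; auto.
    rewrite HGx. rewrite sum_rr; auto. 2:{ intros i Hi; specialize (Hy i Hi); lra. }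
    unfold Sf. rewrite HGx. rewrite pow1. fold (G1 s).
    unfold Psi, L1 in HP. rewrite HGx in HG.
    set (E := ee s) in *. set (G := G1 s) in *. set (P := Pi s w) in *. set (B := w ^ pp) in *.
    set (L := sumR (rr s 1) mm) in *. set (X := XS s w) in *.
    assert (HD : G * (E * w) * B - KK * P <> 0) by (intro; apply HV; lra).
    assert (Hw0 : w <> 0) by lra. assert (HE0 : E <> 0) by lra.
    transitivity (((E*w-1)^2*G*(L-dr n)*(X-dr n)*B*KK*P) / (G*(E*w)*B - KK*P)^2).
    field. repeat split; auto.
    replace ((E*w-1)^2*G*(L-dr n)*(X-dr n)*B*KK*P) with ((G * (E * w) * B - KK * P) ^ 2) by lra.
    field. auto. Qed.

Lemma lim_val (f : R -> R) D l l' x0 : limit1_in f D l x0 -> l = l' -> limit1_in f D l' x0.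
Proof. intros H ->; exact H. Qed.

Lemma sumR_zero m' : sumR (fun _ => 0) m' = 0.
Proof. induction m'; simpl; [|rewrite IHm']; ring. Qed.
Lemma prodR_one m' : prodR (fun _ => 1) m' = 1.
Proof. induction m'; simpl; [|rewrite IHm']; ring. Qed.

Section Lims.
Variable D : R -> Prop.
Hypothesis HD : forall s, D s -> 0 < s.

Lemma lim_ee : limit1_in ee D 0 0.
Proof. apply lim_Rpower0; auto. apply nu_pos. Qed.

Lemma lim_cc i : (1 <= i <= n)%nat -> limit1_in (fun s => cc d n s i) D 0 0.
Proof. intros Hi. eapply lim_ext. intros s Ds. symmetry. apply cc_eq; auto.
  eapply lim_val. apply limit_mul. apply lim_const. apply lim_Rpower0; auto. apply sig_pos; auto.
  ring. Qed.

Lemma lim_cD i : (1 <= i <= mm)%nat -> limit1_in (fun s => cc d n s i ^ Dd d i) D 0 0.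
Proof. intros Hi. eapply lim_val. apply lim_pow. apply lim_cc. unfold mm in Hi; lia.
  rewrite (Dd_pos i Hi). simpl. ring. Qed.

Variable W : R -> R.
Variable w0 : R.
Hypothesis HW : limit1_in W D w0 0.

Lemma lim_yy i : (1 <= i <= mm)%nat -> limit1_in (fun s => yy s (W s) i) D 0 0.
Proof. intros Hi. assert (Hin : (1 <= i <= n)%nat) by (unfold mm in Hi; lia).
  assert (Hnu := nu_gt i ltac:(lia)).
  eapply lim_ext. intros s Ds. symmetry.
  assert (E : (ee s * W s) / cc d n s i = W s * Rpower s (nu d n - sig i) * / Mp).
  { rewrite cc_eq by auto. unfold ee. unfold Rminus. rewrite Rpower_plus, Rpower_Ropp.
    assert (A := Mp_pos). assert (B : 0 < Rpower s (sig i)) by (unfold Rpower; apply exp_pos).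
    field. lra. }
  unfold yy. rewrite E. reflexivity.
  eapply lim_val. apply lim_pow. apply limit_mul. apply limit_mul. apply HW.
  apply lim_Rpower0; auto. lra. apply lim_const.
  rewrite (Dd_pos i Hi). simpl. ring. Qed.

Lemma lim_G1 : limit1_in G1 D 1 0.
Proof. unfold G1. eapply lim_val. apply lim_prodR with (l := fun _ => 1).
  intros i Hi. unfold Rfactor. cbv zeta. rewrite pow1.
  assert (L : limit1_in (fun s => 1 - cc d n s i ^ Dd d i) D 1 0).
  { eapply lim_val. apply limit_minus. apply lim_const. apply lim_cD; auto. ring. }
  destruct (Nat.odd i). eapply lim_val. apply limit_inv. apply L. lra. apply Rinv_1.
  apply L.
  apply prodR_one. Qed.

Lemma lim_L1 : limit1_in L1 D (- dr 1) 0.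
Proof. unfold L1. eapply lim_val. apply limit_minus. 2: apply lim_const.
  apply lim_sumR with (l := fun i => sg i * Dr i).
  intros i Hi. unfold rr. rewrite !pow1.
  eapply lim_val. apply limit_mul. apply lim_const. apply limit_inv.
  eapply limit_minus. apply lim_const. apply lim_cD; auto. lra. field.
  assert (Hmm : mm = (2*k)%nat) by (unfold mm; lia). rewrite Hmm.
  unfold Dr, sig. rewrite tele1 by auto. rewrite <- hnk. ring. Qed.

Lemma lim_XS : limit1_in (fun s => XS s (W s)) D 0 0.
Proof. unfold XS. eapply lim_val. apply lim_sumR with (l := fun _ => 0).
  intros i Hi. eapply lim_val. apply limit_mul. apply limit_mul. apply lim_const. apply lim_yy; auto.
  apply limit_inv. eapply limit_minus. apply lim_yy; auto. apply lim_const. lra. field.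
  apply sumR_zero. Qed.

Lemma lim_Pi : limit1_in (fun s => Pi s (W s)) D 1 0.
Proof. unfold Pi. eapply lim_val. apply lim_prodR with (l := fun _ => 1).
  intros i Hi. unfold bb.
  assert (L : limit1_in (fun s => 1 - yy s (W s) i) D 1 0).
  { eapply lim_val. apply limit_minus. apply lim_const. apply lim_yy; auto. ring. }
  destruct (Nat.odd i). eapply lim_val. apply limit_inv. apply L. lra. apply Rinv_1. apply L.
  apply prodR_one. Qed.

Lemma lim_Psi : limit1_in (fun s => Psi s (W s)) D (KK * (dr 1 * dr n * w0 ^ pp - KK)) 0.
Proof. unfold Psi. eapply lim_val.
  apply limit_minus.
  apply limit_mul; [| apply lim_Pi].
  apply limit_mul; [| apply lim_const].
  apply limit_mul; [| apply lim_pow, HW].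
  apply limit_mul; [| apply limit_minus; [apply lim_XS | apply lim_const]].
  apply limit_mul; [| apply lim_L1].
  apply limit_mul; [| apply lim_G1].
  apply lim_pow. apply limit_minus. apply limit_mul. apply lim_ee. apply HW. apply lim_const.
  apply lim_pow. apply limit_minus.
  apply limit_mul; [| apply lim_pow, HW].
  apply limit_mul; [apply lim_G1 | apply limit_mul; [apply lim_ee | apply HW]].
  apply limit_mul; [apply lim_const | apply lim_Pi].
  ring. Qed.

End Lims.

Lemma KK_pos : 0 < KK. Proof. unfold KK, Rpower. apply exp_pos. Qed.

Lemma Xd_pos : 0 < INR (dmax d n).
Proof. assert (H := dmax_ge n ltac:(lia)). assert (H2 := hd2 n ltac:(lia)). apply lt_0_INR. lia. Qed.

Lemma Rpower_pos x a : 0 < Rpower x a. Proof. unfold Rpower; apply exp_pos. Qed.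

Lemma ws_pos : 0 < ws.
Proof. unfold ws, mu. assert (A := dr_ge2 1 ltac:(lia)). assert (B := dr_ge2 n ltac:(lia)).
  unfold dr in *. repeat apply Rmult_lt_0_compat; try lra; apply Rpower_pos. Qed.

Lemma ws_pp : ws ^ pp = KK / (dr 1 * dr n).
Proof. assert (A := dr_ge2 1 ltac:(lia)). assert (B := dr_ge2 n ltac:(lia)).
  assert (HA : 0 < dr 1 * dr n) by nra. assert (HX := Xd_pos). assert (Hn1 := drn_ne1).
  rewrite <- Rpower_pow by apply ws_pos. rewrite INR_pp.
  assert (E : ws = Rpower (dr 1 * dr n) (1 - dr n / (dr n - 1)) *
     Rpower (INR (dmax d n)) (2 * (dr n - dr 1) / (dr 1 * (dr n - 1)))).
  { replace (1 - dr n / (dr n - 1)) with (1 + - (dr n / (dr n - 1))) by ring.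
    rewrite Rpower_plus, Rpower_1 by auto. unfold ws, mu, dr. ring. }
  rewrite E. rewrite <- Rpower_mult_distr by apply Rpower_pos. rewrite !Rpower_mult.
  unfold KK, MM. rewrite <- (Rpower_pow 2) by auto. rewrite Rpower_mult.
  replace ((1 - dr n / (dr n - 1)) * (dr n - 1)) with (Ropp 1) by (field; auto).
  rewrite Rpower_Ropp, Rpower_1 by auto. unfold Rdiv. rewrite Rmult_comm. f_equal. f_equal.
  simpl. field. split; lra. Qed.

Section Lims2.
Variable D : R -> Prop.
Hypothesis HD : forall s, D s -> 0 < s.
Variable W : R -> R.
Variable w0 : R.
Hypothesis HW : limit1_in W D w0 0.
Hypothesis HWpos : forall s, D s -> 0 < W s.
Hypothesis Hw0 : 0 < w0.

Lemma lim_Sf : limit1_in (fun s => Sf s (W s) / ee s) D (w0 * w0 ^ pp / KK) 0.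
Proof. assert (HK := KK_pos).
  eapply lim_ext. intros s Ds. symmetry.
  assert (Hs := HD s Ds). assert (Hw := HWpos s Ds). assert (He := ee_pos s).
  assert (Hwp : 0 < W s ^ pp) by (apply pow_lt; lra).
  transitivity ((ee s * W s - 1) * / (ee s * G1 s - KK * Pi s (W s) * / (W s * W s ^ pp))).
  2: reflexivity.
  unfold Sf. rewrite Gx_eq by auto.
  replace (ee s * G1 s - KK * Pi s (W s) * / (W s * W s ^ pp)) with
    (ee s * (G1 s - KK * Pi s (W s) / (ee s * W s * W s ^ pp))) by (field; split; lra).
  rewrite Rinv_mult. unfold Rdiv. ring.
  eapply lim_val. apply limit_mul. apply limit_minus. apply limit_mul. apply (lim_ee D HD). apply HW.
  apply lim_const. apply limit_inv. apply limit_minus. apply limit_mul. apply (lim_ee D HD).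
  apply (lim_G1 D HD). apply limit_mul. apply limit_mul. apply lim_const. apply (lim_Pi D HD W w0 HW).
  apply limit_inv. apply limit_mul. apply HW. apply lim_pow, HW.
  assert (0 < w0 ^ pp) by (apply pow_lt; lra). nra.
  assert (0 < w0 ^ pp) by (apply pow_lt; lra).
  assert (0 < / (w0 * w0 ^ pp)) by (apply Rinv_0_lt_compat; nra).
  assert (0 < KK * 1 * / (w0 * w0 ^ pp)) by nra. lra.
  assert (0 < w0 ^ pp) by (apply pow_lt; lra). field. split; lra. Qed.

Lemma lim_Tf : limit1_in (fun s => Tf s (W s) / ee s) D (w0 - w0 * w0 ^ pp / KK) 0.
Proof. eapply lim_ext. intros s Ds. symmetry.
  assert (He := ee_pos s). unfold Tf.
  replace ((ee s * W s - Sf s (W s) * G1 s) / ee s) with (W s - Sf s (W s) / ee s * G1 s)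
    by (field; lra). reflexivity.
  eapply lim_val. apply limit_minus. apply HW. apply limit_mul. apply lim_Sf. apply (lim_G1 D HD).
  ring. Qed.

Lemma lim_z0 : limit1_in (fun s => ee s * W s / ee s) D w0 0.
Proof. eapply lim_ext. 2: apply HW. intros s Ds. assert (He := ee_pos s). field. lra. Qed.

End Lims2.

Section Cont.
Variable s : R.
Hypothesis Hs : 0 < s.
Variable D' : R -> Prop.
Variable w1 : R.
Hypothesis Hy1 : forall i, (1 <= i <= mm)%nat -> yy s w1 i < 1.

Lemma cont_yy i : limit1_in (fun w => yy s w i) D' (yy s w1 i) w1.
Proof. unfold yy. apply lim_pow. apply limit_mul. apply limit_mul. apply lim_const. apply lim_id.
  apply lim_const. Qed.

Lemma cont_XS : limit1_in (fun w => XS s w) D' (XS s w1) w1.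
Proof. unfold XS. apply lim_sumR. intros i Hi. apply limit_mul. apply limit_mul. apply lim_const.
  apply cont_yy. apply limit_inv. apply limit_minus. apply cont_yy. apply lim_const.
  specialize (Hy1 i Hi). lra. Qed.

Lemma cont_Pi : limit1_in (fun w => Pi s w) D' (Pi s w1) w1.
Proof. unfold Pi. apply lim_prodR. intros i Hi. unfold bb. specialize (Hy1 i Hi).
  destruct (Nat.odd i). apply limit_inv. apply limit_minus. apply lim_const. apply cont_yy. lra.
  apply limit_minus. apply lim_const. apply cont_yy. Qed.

Lemma cont_Psi : limit1_in (fun w => Psi s w) D' (Psi s w1) w1.
Proof. unfold Psi. apply limit_minus.
  apply limit_mul; [| apply cont_Pi].
  apply limit_mul; [| apply lim_const].
  apply limit_mul; [| apply lim_pow, lim_id].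
  apply limit_mul; [| apply limit_minus; [apply cont_XS | apply lim_const]].
  apply limit_mul; [| apply lim_const].
  apply limit_mul; [| apply lim_const].
  apply lim_pow. apply limit_minus. apply limit_mul. apply lim_const. apply lim_id. apply lim_const.
  apply lim_pow. apply limit_minus.
  apply limit_mul; [| apply lim_pow, lim_id].
  apply limit_mul; [apply lim_const | apply limit_mul; [apply lim_const | apply lim_id]].
  apply limit_mul; [apply lim_const | apply cont_Pi]. Qed.

End Cont.

Lemma cont_pt_Psi s w1 : 0 < s -> (forall i, (1 <= i <= mm)%nat -> yy s w1 i < 1) ->
  continuity_pt (Psi s) w1.
Proof. intros Hs Hy. unfold continuity_pt, continue_in. apply cont_Psi; auto. Qed.

Lemma yy_mono s w w' i : 0 < s -> (1 <= i <= mm)%nat -> 0 <= w <= w' ->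
  0 <= yy s w i <= yy s w' i.
Proof. intros Hs Hi Hw. assert (Hc := cc_pos s i Hs ltac:(unfold mm in Hi; lia)).
  assert (He := ee_pos s). unfold yy. split. apply pow_le.
  unfold Rdiv. apply Rmult_le_pos. nra. left; apply Rinv_0_lt_compat; lra.
  apply pow_incr. split. unfold Rdiv. apply Rmult_le_pos. nra. left; apply Rinv_0_lt_compat; lra.
  unfold Rdiv. apply Rmult_le_compat_r. left; apply Rinv_0_lt_compat; lra. nra. Qed.

Definition wm (j : nat) := ws * (1 - / INR (j + 2)).
Definition wp (j : nat) := ws * (1 + / INR (j + 2)).
Definition cond (j : nat) (s : R) := exists w, wm j <= w <= wp j /\ Good s w.

Lemma inv_k2 j : 0 < / INR (j + 2) <= / 2.
Proof. assert (H : 2 <= INR (j + 2)) by (replace 2 with (INR 2) by reflexivity; apply le_INR; lia).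
  split. apply Rinv_0_lt_compat; lra. apply Rinv_le_contravar; lra. Qed.

Lemma wm_wp j : 0 < wm j < ws /\ ws < wp j.
Proof. assert (H := inv_k2 j). assert (Hw := ws_pos). unfold wm, wp. split; [split|]; nra. Qed.

Lemma pp_pos : (1 <= pp)%nat. Proof. unfold pp. assert (A := hd2 n ltac:(lia)). lia. Qed.

Lemma pow_pp_lt a b : 0 < a < b -> a ^ pp < b ^ pp.
Proof. intros H. rewrite <- !Rpower_pow by lra. apply Rlt_Rpower_l. 
  assert (A := pp_pos). apply lt_0_INR. lia. auto. Qed.

Lemma Psi_lim_sign_p j : 0 < KK * (dr 1 * dr n * wp j ^ pp - KK).
Proof. assert (HK := KK_pos). destruct (wm_wp j) as [[A B] C].
  assert (H := pow_pp_lt ws (wp j) ltac:(lra)). rewrite ws_pp in H.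
  assert (P1 := dr_ge2 1 ltac:(lia)). assert (P2 := dr_ge2 n ltac:(lia)).
  assert (KK < dr 1 * dr n * wp j ^ pp).
  { apply Rmult_lt_compat_l with (r := dr 1 * dr n) in H. 2: nra.
    replace (dr 1 * dr n * (KK / (dr 1 * dr n))) with KK in H by (field; lra). lra. }
  nra. Qed.

Lemma Psi_lim_sign_m j : KK * (dr 1 * dr n * wm j ^ pp - KK) < 0.
Proof. assert (HK := KK_pos). destruct (wm_wp j) as [[A B] C].
  assert (H := pow_pp_lt (wm j) ws ltac:(lra)). rewrite ws_pp in H.
  assert (P1 := dr_ge2 1 ltac:(lia)). assert (P2 := dr_ge2 n ltac:(lia)).
  assert (dr 1 * dr n * wm j ^ pp < KK).
  { apply Rmult_lt_compat_l with (r := dr 1 * dr n) in H. 2: nra.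
    replace (dr 1 * dr n * (KK / (dr 1 * dr n))) with KK in H by (field; lra). lra. }
  nra. Qed.

Lemma cond_evt j : exists del, 0 < del /\ forall s, 0 < s < del -> cond j s.
Proof.
  pose (D := fun s : R => 0 < s). assert (HD : forall s, D s -> 0 < s) by auto.
  destruct (wm_wp j) as [[Hm1 Hm2] Hp].
  set (w2 := wp j) in *. set (w1 := wm j) in *.
  assert (HK := KK_pos).
  assert (Hc2 : limit1_in (fun _ : R => w2) D w2 0) by apply lim_const.
  assert (Hc1 : limit1_in (fun _ : R => w1) D w1 0) by apply lim_const.
  assert (La : limit1_in (fun s => sumR (fun i => yy s w2 i) mm) D 0 0).
  { eapply lim_val. apply lim_sumR with (l := fun _ => 0). intros i Hi.
    apply (lim_yy D HD (fun _ => w2) w2 Hc2 i Hi). apply sumR_zero. }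
  destruct (lim_evt_lt _ _ _ _ 1 La ltac:(lra)) as [da [Hda Ha]].
  assert (Lb : limit1_in (fun s => sumR (fun i => cc d n s i ^ Dd d i) mm) D 0 0).
  { eapply lim_val. apply lim_sumR with (l := fun _ => 0). intros i Hi.
    apply (lim_cD D HD i Hi). apply sumR_zero. }
  destruct (lim_evt_lt _ _ _ _ 1 Lb ltac:(lra)) as [db [Hdb Hb]].
  destruct (lim_evt_gt _ _ _ _ 0 (lim_G1 D HD) ltac:(lra)) as [dc [Hdc Hc]].
  assert (Ld : limit1_in (fun s => G1 s * (ee s * w2) * w2 ^ pp) D 0 0).
  { eapply lim_val. apply limit_mul. apply limit_mul. apply (lim_G1 D HD).
    apply limit_mul. apply (lim_ee D HD). apply lim_const. apply lim_const. ring. }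
  destruct (lim_evt_lt _ _ _ _ (KK/2) Ld ltac:(lra)) as [dd [Hdd Hd]].
  assert (Le : limit1_in (fun s => prodR (fun i => 1 - yy s w2 i) mm) D 1 0).
  { eapply lim_val. apply lim_prodR with (l := fun _ => 1). intros i Hi.
    eapply lim_val. apply limit_minus. apply lim_const.
    apply (lim_yy D HD (fun _ => w2) w2 Hc2 i Hi). ring. apply prodR_one. }
  destruct (lim_evt_gt _ _ _ _ (1/2) Le ltac:(lra)) as [de [Hde He]].
  destruct (lim_evt_lt _ _ _ _ 0 (lim_Psi D HD (fun _ => w1) w1 Hc1) (Psi_lim_sign_m j))
    as [df [Hdf Hf]].
  destruct (lim_evt_gt _ _ _ _ 0 (lim_Psi D HD (fun _ => w2) w2 Hc2) (Psi_lim_sign_p j))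
    as [dg [Hdg Hg]].
  exists (Rmin da (Rmin db (Rmin dc (Rmin dd (Rmin de (Rmin df dg)))))).
  split. repeat apply Rmin_pos; auto.
  intros s [Hs Hsd].
  assert (Hr : forall del, Rmin da (Rmin db (Rmin dc (Rmin dd (Rmin de (Rmin df dg))))) <= del ->
     Rabs (s - 0) < del).
  { intros del Hle. rewrite Rminus_0_r, Rabs_pos_eq by lra. lra. }
  assert (Ds : D s) by exact Hs.
  specialize (Ha s Ds (Hr da ltac:(apply Rmin_l))).
  specialize (Hb s Ds (Hr db ltac:(eapply Rle_trans; [apply Rmin_r| apply Rmin_l]))).
  specialize (Hc s Ds (Hr dc ltac:(eapply Rle_trans; [apply Rmin_r|];
     eapply Rle_trans; [apply Rmin_r| apply Rmin_l]))).
  specialize (Hd s Ds (Hr dd ltac:(do 3 (eapply Rle_trans; [apply Rmin_r|]); apply Rmin_l))).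
  specialize (He s Ds (Hr de ltac:(do 4 (eapply Rle_trans; [apply Rmin_r|]); apply Rmin_l))).
  specialize (Hf s Ds (Hr df ltac:(do 5 (eapply Rle_trans; [apply Rmin_r|]); apply Rmin_l))).
  specialize (Hg s Ds (Hr dg ltac:(do 5 (eapply Rle_trans; [apply Rmin_r|]); apply Rmin_r))).
  clear Hr.
  assert (Hyb : forall w i, 0 <= w <= w2 -> (1 <= i <= mm)%nat -> 0 <= yy s w i < 1).
  { intros w i Hw Hi. destruct (yy_mono s w w2 i Hs Hi Hw) as [Y1 Y2].
    assert (yy s w2 i <= sumR (fun i => yy s w2 i) mm).
    { apply sumR_nonneg_le; auto. intros j0 Hj0. apply (yy_mono s w2 w2 j0 Hs Hj0). lra. }
    lra. }
  destruct (Ranalysis5.IVT_interv (Psi s) w1 w2) as [z [Hz HPz]].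
  { intros a Ha0. apply cont_pt_Psi; auto. intros i Hi. apply (Hyb a i); auto. lra. }
  lra. exact Hf. exact Hg.
  exists z. split. exact Hz. apply good_of; auto. lra.
  - intros i Hi. apply (Hyb z i); auto. lra.
  - intros i Hi. assert (Hin : (1 <= i <= n)%nat) by (unfold mm in Hi; lia).
    assert (Hc0 := cc_pos s i Hs Hin). assert (0 < cc d n s i ^ Dd d i) by (apply pow_lt; lra).
    assert (cc d n s i ^ Dd d i <= sumR (fun i => cc d n s i ^ Dd d i) mm).
    { apply (sumR_nonneg_le (fun i => cc d n s i ^ Dd d i) mm i); auto. intros j0 Hj0. apply pow_le.
      left; apply cc_pos; auto. unfold mm in Hj0; lia. }
    lra.
  - assert (HPi : prodR (fun i => 1 - yy s w2 i) mm <= Pi s z).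
    { apply prodR_le. intros i Hi. destruct (Hyb z i ltac:(lra) Hi) as [Z1 Z2].
      destruct (Hyb w2 i ltac:(lra) Hi) as [W1 W2].
      destruct (yy_mono s z w2 i Hs Hi ltac:(lra)) as [_ M]. unfold bb.
      split. lra. destruct (Nat.odd i). 
      assert (1 <= / (1 - yy s z i)). { rewrite <- Rinv_1. apply Rinv_le_contravar; lra. } lra.
      lra. }
    assert (HV : G1 s * (ee s * z) * z ^ pp <= G1 s * (ee s * w2) * w2 ^ pp).
    { assert (A := ee_pos s). apply Rmult_le_compat. 
      apply Rmult_le_pos; [lra|]. nra. apply pow_le; lra.
      apply Rmult_le_compat_l. lra. apply Rmult_le_compat_l; lra.
      apply pow_incr; lra. }
    intro H. nra.
Qed.

Fixpoint best (s : R) (N : nat) : nat :=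
  match N with
  | O => O
  | S N' => if excluded_middle_informative (cond (S N') s) then S N' else best s N'
  end.

Lemma best_cond s N : cond 0 s -> cond (best s N) s.
Proof. intros H0. induction N; simpl; auto.
  destruct (excluded_middle_informative (cond (S N) s)); auto. Qed.

Lemma best_ge s N j : (j <= N)%nat -> cond j s -> (j <= best s N)%nat.
Proof. intros Hj Hc. induction N; simpl. lia.
  destruct (excluded_middle_informative (cond (S N) s)). lia.
  destruct (Nat.eq_dec j (S N)) as [->|]. contradiction. apply IHN. lia. Qed.

Definition NN (s : R) := Z.to_nat (up (/ s)).

Lemma NN_ge j s : 0 < s -> s < / INR (j + 1) -> (j <= NN s)%nat.
Proof. intros Hs Hsj. assert (Hj : 0 < INR (j + 1)) by (apply lt_0_INR; lia).
  assert (H1 : INR (j + 1) < / s).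
  { rewrite <- (Rinv_inv (INR (j+1))). apply Rinv_lt_contravar. 
    apply Rmult_lt_0_compat; auto. apply Rinv_0_lt_compat; auto. auto. }
  destruct (archimed (/ s)) as [A _].
  assert (H2 : IZR (Z.of_nat (j + 1)) < IZR (up (/ s))) by (rewrite <- INR_IZR_INZ; lra).
  apply lt_IZR in H2. unfold NN. lia. Qed.

Definition wsel (s : R) : R :=
  epsilon (inhabits 0) (fun w => wm (best s (NN s)) <= w <= wp (best s (NN s)) /\ Good s w).

Lemma wsel_spec s : cond 0 s ->
  wm (best s (NN s)) <= wsel s <= wp (best s (NN s)) /\ Good s (wsel s).
Proof. intros H0. unfold wsel. apply epsilon_spec. apply best_cond. auto. Qed.

Lemma main_sec : exists s0 : R, 0 < s0 /\
  exists (Sn Tn z0 : R -> R),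
    (forall s, 0 < s < s0 ->
       Rn d n s (Sn s) (Tn s) 1 = z0 s /\
       Rn d n s (Sn s) (Tn s) (z0 s) = 1 /\
       exists l1 l2 : R,
         derivable_pt_lim (fun z => Rn d n s (Sn s) (Tn s) z) 1 l1 /\
         derivable_pt_lim (fun z => Rn d n s (Sn s) (Tn s) z) (z0 s) l2 /\
         l1 * l2 = 1) /\
    limit1_in (fun s => Sn s / Rpower s (nu d n)) (fun s => 0 < s < s0)
      (mu d n) 0 /\
    limit1_in (fun s => Tn s / Rpower s (nu d n)) (fun s => 0 < s < s0)
      ((INR (d 1%nat) * INR (d n) - 1) * mu d n) 0 /\
    limit1_in (fun s => z0 s / Rpower s (nu d n)) (fun s => 0 < s < s0)
      (INR (d 1%nat) * INR (d n) * mu d n) 0.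
Proof.
  destruct (cond_evt 0) as [s0 [Hs0 H0]].
  exists s0. split; auto.
  exists (fun s => Sf s (wsel s)), (fun s => Tf s (wsel s)), (fun s => ee s * wsel s).
  pose (D0 := fun s => 0 < s < s0).
  assert (HD : forall s, D0 s -> 0 < s) by (intros s [A B]; auto).
  assert (Hsp : forall s, D0 s -> wm (best s (NN s)) <= wsel s <= wp (best s (NN s)) /\ Good s (wsel s))
    by (intros s Hs; apply wsel_spec; apply H0; auto).
  assert (Hpos : forall s, D0 s -> 0 < wsel s).
  { intros s Hs. destruct (Hsp s Hs) as [[A _] _]. destruct (wm_wp (best s (NN s))) as [[B _] _]. lra. }
  assert (HWs := ws_pos).
  assert (LW : limit1_in wsel D0 ws 0).
  { intros eps Heps.
    set (j := Z.to_nat (up (ws / eps))).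
    assert (Hj : ws / INR (j + 2) < eps).
    { destruct (archimed (ws / eps)) as [A _].
      assert (B : ws / eps < INR (j + 2)).
      { rewrite plus_INR. assert (IZR (up (ws/eps)) <= INR j).
        { unfold j. rewrite INR_IZR_INZ. apply IZR_le. 
          assert (0 <= ws / eps) by (unfold Rdiv; apply Rmult_le_pos; [lra| left; apply Rinv_0_lt_compat; lra]).
          assert (0 < IZR (up (ws / eps))) by lra. apply lt_IZR in H1. lia. }
        simpl. lra. }
      apply (Rmult_lt_reg_r (INR (j+2) / eps)). 
      unfold Rdiv. apply Rmult_lt_0_compat. apply lt_0_INR; lia. apply Rinv_0_lt_compat; lra.
      assert (0 < INR (j+2)) by (apply lt_0_INR; lia).
      replace (ws / INR (j + 2) * (INR (j + 2) / eps)) with (ws / eps) by (field; lra).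
      replace (eps * (INR (j + 2) / eps)) with (INR (j+2)) by (field; lra). lra. }
    destruct (cond_evt j) as [dj [Hdj Hcj]].
    assert (Hj1 : 0 < / INR (j + 1)) by (apply Rinv_0_lt_compat, lt_0_INR; lia).
    exists (Rmin dj (/ INR (j + 1))). split. apply Rmin_pos; auto.
    intros s [Ds Hs]. simpl in Hs. unfold R_dist in Hs. destruct Ds as [Hs1 Hs2].
    rewrite Rminus_0_r, Rabs_pos_eq in Hs by lra.
    assert (Hc : cond j s) by (apply Hcj; split; auto; eapply Rlt_le_trans; [eauto| apply Rmin_l]).
    assert (HN : (j <= NN s)%nat) by (apply NN_ge; auto; eapply Rlt_le_trans; [eauto| apply Rmin_r]).
    assert (Hb := best_ge s (NN s) j HN Hc).
    destruct (Hsp s (conj Hs1 Hs2)) as [[A B] _].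
    set (b := best s (NN s)) in *.
    assert (Hbj : / INR (b + 2) <= / INR (j + 2)).
    { apply Rinv_le_contravar. apply lt_0_INR; lia. apply le_INR; lia. }
    simpl. unfold R_dist. unfold wm, wp in A, B.
    assert (ws * / INR (b + 2) <= ws * / INR (j + 2)) by (apply Rmult_le_compat_l; lra).
    unfold Rdiv in Hj. apply Rabs_def1; nra. }
  split; [|split; [|split]].
  - intros s Hs. exact (proj2 (Hsp s Hs)).
  - eapply lim_val. apply (lim_Sf D0 HD wsel ws LW Hpos HWs).
    rewrite ws_pp. unfold ws. assert (HK := KK_pos).
    assert (P1 := dr_ge2 1 ltac:(lia)). assert (P2 := dr_ge2 n ltac:(lia)). field. split; lra.
  - eapply lim_val. apply (lim_Tf D0 HD wsel ws LW Hpos HWs).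
    rewrite ws_pp. unfold ws. assert (HK := KK_pos).
    assert (P1 := dr_ge2 1 ltac:(lia)). assert (P2 := dr_ge2 n ltac:(lia)). unfold dr in *. field. split; lra.
  - apply (lim_z0 D0 wsel ws LW).
Qed.
End Main.

Theorem lemma4p1 (n : nat) (d : nat -> nat)
  (hn3 : (3 <= n)%nat) (hnodd : Nat.odd n = true)
  (hdpos : forall i, (1 <= i <= n)%nat -> (1 <= d i)%nat)
  (hsum : sumR (fun i => / INR (d i)) n < 1) :
  exists s0 : R, 0 < s0 /\
  exists (Sn Tn z0 : R -> R),
    (forall s, 0 < s < s0 ->
       Rn d n s (Sn s) (Tn s) 1 = z0 s /\
       Rn d n s (Sn s) (Tn s) (z0 s) = 1 /\
       exists l1 l2 : R,
         derivable_pt_lim (fun z => Rn d n s (Sn s) (Tn s) z) 1 l1 /\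
         derivable_pt_lim (fun z => Rn d n s (Sn s) (Tn s) z) (z0 s) l2 /\
         l1 * l2 = 1) /\
    limit1_in (fun s => Sn s / Rpower s (nu d n)) (fun s => 0 < s < s0)
      (mu d n) 0 /\
    limit1_in (fun s => Tn s / Rpower s (nu d n)) (fun s => 0 < s < s0)
      ((INR (d 1%nat) * INR (d n) - 1) * mu d n) 0 /\
    limit1_in (fun s => z0 s / Rpower s (nu d n)) (fun s => 0 < s < s0)
      (INR (d 1%nat) * INR (d n) * mu d n) 0.
Proof.
  destruct (proj1 (Nat.odd_spec n) hnodd) as [k Hk].
  assert (hnk : n = S (2*k)) by lia. assert (hk : (1 <= k)%nat) by lia.
  assert (hd2 : forall i, (1 <= i <= n)%nat -> (2 <= d i)%nat).
  { intros i Hi. destruct (Nat.eq_dec (d i) 1) as [E|E]; [|specialize (hdpos i Hi); lia].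
    exfalso. assert (H := sumR_nonneg_le (fun i => / INR (d i)) n i).
    simpl in H. rewrite E in H. simpl in H. rewrite Rinv_1 in H.
    assert (1 <= sumR (fun i => / INR (d i)) n); [|lra]. apply H; auto.
    intros j Hj. left. apply Rinv_0_lt_compat. apply lt_0_INR. specialize (hdpos j Hj). lia. }
  apply (main_sec d n k); auto.
Qed.
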